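(* The momentum map $F=(L,H)$ of the $b$-coupled spin-oscillator restricted to either open half $M^+=\{z>0\}\times\mathbb R^2$ or $M^-=\{z<0\}\times\mathbb R^2$ is surjective onto $\mathbb R^2$.
   Context: Fix constants $\rho_1,\rho_2>0$. Let $S^2\subset\mathbb R^3$ be the unit sphere with coordinates $(x,y,z)$, $x^2+y^2+z^2=1$, and $(u,v)$ coordinates on $\mathbb R^2$; $M=S^2\times\mathbb R^2$. The $b$-coupled spin-oscillator momentum map is $F=(L,H)$ with $L=\rho_1\log|z|+\frac{\rho_2}{2}(u^2+v^2)$ and $H=\frac12(xu+yv)$; on $M^{\pm}$ it is a smooth integrable system for the symplectic form $-\rho_1\frac{1}{1-x^2-y^2}dx\wedge dy+\rho_2\,du\wedge dv$ (in coordinates $(x,y,u,v)$). *)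

(* Defs.v *)
From Stdlib Require Import Reals.
Open Scope R_scope.

(* A point of M = S^2 x R^2, with coordinates (x,y,z) on S^2 and (u,v) on R^2. *)
Record point := mkPt { px : R; py : R; pz : R; pu : R; pv : R }.

Definition in_M (p : point) : Prop :=
  (px p)^2 + (py p)^2 + (pz p)^2 = 1.

Definition in_Mplus (p : point) : Prop := in_M p /\ 0 < pz p.
Definition in_Mminus (p : point) : Prop := in_M p /\ pz p < 0.

Definition momL (rho1 rho2 : R) (p : point) : R :=
  rho1 * ln (Rabs (pz p)) + rho2 / 2 * ((pu p)^2 + (pv p)^2).
Definition momH (p : point) : R :=
  / 2 * (px p * pu p + py p * pv p).

(* Main.v *)
Require Import Defs.
From Stdlib Require Import Reals Lra.
Open Scope R_scope.

Lemma key (rho1 rho2 : R) (hrho1 : 0 < rho1) (hrho2 : 0 < rho2) (l h : R) :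
  exists z x u v, 0 < z /\ x^2 + z^2 = 1 /\
    rho1 * ln z + rho2 / 2 * (u^2 + v^2) = l /\ / 2 * (x * u) = h.
Proof.
  set (KK := (Rabs l + rho1 + 4 * rho2 * h^2)).
  set (t := (l - KK) / rho1).
  assert (HK : 0 <= 4 * rho2 * h^2) by (apply Rmult_le_pos; [lra| nra]).
  assert (Ht : t <= -1).
  { unfold t, KK. apply (Rmult_le_reg_r rho1); [lra|].
    field_simplify; [|lra]. pose proof (Rle_abs l). lra. }
  set (z := exp t).
  assert (Hz0 : 0 < z) by apply exp_pos.
  assert (He1 : 2 < exp 1) by (pose proof (exp_ineq1 1); lra).
  assert (Hz : z < 1/2).
  { unfold z. apply Rle_lt_trans with (exp (-1)).
    destruct (Req_dec t (-1)) as [->|Hn]; [lra|].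
    left; apply exp_increasing; lra.
    replace (-1) with (-(1)) by ring. rewrite exp_Ropp. apply (Rmult_lt_reg_l (exp 1)); [lra|].
    rewrite Rinv_r; lra. }
  set (r2 := 1 - z^2).
  assert (Hr2 : 3/4 < r2) by (unfold r2; nra).
  set (x := sqrt r2).
  assert (Hx2 : x^2 = r2) by (unfold x; simpl; rewrite Rmult_1_r; apply sqrt_sqrt; lra).
  assert (Hx : 0 < x) by (unfold x; apply sqrt_lt_R0; lra).
  set (u := 2 * h / x).
  set (s := 2 * KK / rho2).
  assert (Hu2 : u^2 <= s).
  { unfold u, s. assert (u^2 = 4*h^2 / r2) by (unfold u; rewrite <- Hx2; field; lra).
    unfold u in H; rewrite H.
    assert (4*h^2/r2 <= 8*h^2).
    { apply (Rmult_le_reg_r r2); [lra|]. field_simplify; [|lra]. nra. }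
    assert (8*h^2 <= 2*KK/rho2).
    { apply (Rmult_le_reg_r rho2); [lra|]. field_simplify; [|lra].
      unfold KK. pose proof (Rabs_pos l). nra. }
    lra. }
  set (v := sqrt (s - u^2)).
  assert (Hv2 : v^2 = s - u^2) by (unfold v; rewrite <- Rsqr_pow2; apply Rsqr_sqrt; lra).
  exists z, x, u, v. split; [lra|]. split; [unfold r2 in Hx2; lra|]. split.
  - rewrite Hv2. unfold z. rewrite ln_exp. unfold t, s. field. lra.
  - unfold u. field. lra.
Qed.

Theorem corollary4p7 (rho1 rho2 : R) (hrho1 : 0 < rho1) (hrho2 : 0 < rho2) :
  (forall l h : R, exists p : point,
      in_Mplus p /\ momL rho1 rho2 p = l /\ momH p = h) /\
  (forall l h : R, exists p : point,
      in_Mminus p /\ momL rho1 rho2 p = l /\ momH p = h).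
Proof.
  split; intros l h; destruct (key rho1 rho2 hrho1 hrho2 l h) as (z & x & u & v & Hz & H1 & H2 & H3).
  - exists (mkPt x 0 z u v). unfold in_Mplus, in_M, momL, momH; simpl.
    rewrite Rabs_right by lra. split; [split; [nra|lra]|]. split; [lra|]. rewrite <- H3; ring.
  - exists (mkPt x 0 (-z) u v). unfold in_Mminus, in_M, momL, momH; simpl.
    rewrite Rabs_Ropp, Rabs_right by lra. split; [split; [nra|lra]|]. split; [lra|]. rewrite <- H3; ring.
Qed.
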